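(* Let $F=(f_t)_{t\in\mathbb{R}}$ be a continuous flow on a compact metric space $X$, $\phi\colon X\to\mathbb{R}$ continuous, and $\mathcal{G}\subset X\times\mathbb{R}^+$. Suppose that $\mathcal{G}\cap(X\times[T_0,\infty))$ has (W)-specification at scale $\delta>0$ with maximum gap size $\tau$, and $\zeta>\delta$ is such that $\phi$ has the Bowen property on $\mathcal{G}$ at scale $\zeta$. Then for every $\gamma>2\zeta$ there is a constant $C_1>0$ such that for every $k\in\mathbb{N}$ and $t_1,\dots,t_k\ge T_0$, writing $T=\sum_{i=1}^kt_i+(k-1)\tau$ and $\theta=\zeta-\delta$, we have $$\prod_{j=1}^k\Lambda(\mathcal{G},\gamma,0,t_j)\le C_1^k\Lambda(X,\theta,0,T).$$
   Context: $\mathbb{R}^+=[0,\infty)$. $d_t(x,y)=\sup_{s\in[0,t]}d(f_sx,f_sy)$, $B_t(x,\eta)=\{y:d_t(x,y)<\eta\}$; $E$ is $(t,\delta)$-separated if $d_t(x,y)>\delta$ for distinct $x,y\in E$. $\mathcal{C}_t=\{x:(x,t)\in\mathcal{C}\}$; $\Phi_\eta(x,t)=\sup_{y\in B_t(x,\eta)}\int_0^t\phi(f_sy)ds$; $\Lambda(\mathcal{C},\delta,\eta,t)=\sup\{\sum_{x\in E}e^{\Phi_\eta(x,t)}:E\subset\mathcal{C}_t\ (t,\delta)\text{-separated}\}$, with $X$ meaning $\mathcal{C}=X\times\mathbb{R}^+$. A collection $\mathcal{G}'$ has (W)-specification at scale $\delta$ with maximum gap size $\tau$ if for every $\{(x_i,t_i)\}_{i=1}^k\subset\mathcal{G}'$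 there are $y\in X$ and $\tau_1,\dots,\tau_{k-1}\in[0,\tau]$ with $d_{t_j}(f_{s_{j-1}+\tau_{j-1}}y,x_j)<\delta$ for $1\le j\le k$, where $s_j=\sum_{i\le j}t_i+\sum_{i\le j-1}\tau_i$, $s_0=\tau_0=0$; and if two collections agree in their first $j$ entries then their gluing times agree for indices $<j$. $\phi$ has the Bowen property at scale $\zeta$ on $\mathcal{G}$ if there is $K$ with $\sup_{y\in B_t(x,\zeta)}|\Phi_0(x,t)-\Phi_0(y,t)|\le K$ for all $(x,t)\in\mathcal{G}$. *)

(* Defs.v *)
From Stdlib Require Import Reals List.
From Coquelicot Require Import Coquelicot.
Open Scope R_scope.

Section FlowDefs.
Context {X : Type} (d : X -> X -> R).

Definition is_metric : Prop :=
  (forall x y, 0 <= d x y) /\ (forall x y, d x y = 0 <-> x = y) /\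
  (forall x y, d x y = d y x) /\ (forall x y z, d x z <= d x y + d y z).

Definition is_open (U : X -> Prop) : Prop :=
  forall x, U x -> exists r, 0 < r /\ forall y, d x y < r -> U y.

Definition is_compact : Prop :=
  forall (I : Type) (U : I -> X -> Prop),
    (forall i, is_open (U i)) -> (forall x, exists i, U i x) ->
    exists l : list I, forall x, exists i, In i l /\ U i x.

Definition is_continuous_flow (f : R -> X -> X) : Prop :=
  (forall x, f 0 x = x) /\
  (forall s t x, f (s + t) x = f s (f t x)) /\
  (forall s x eps, 0 < eps -> exists eta, 0 < eta /\
     forall s' x', Rabs (s' - s) < eta -> d x x' < eta ->
       d (f s x) (f s' x') < eps).

Definition is_continuous_fun (phi : X -> R) : Prop :=
  forall x eps, 0 < eps -> exists eta, 0 < eta /\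
    forall y, d x y < eta -> Rabs (phi y - phi x) < eps.

Variable f : R -> X -> X.

Definition dt (t : R) (x y : X) : Rbar :=
  Lub_Rbar (fun v => exists s, 0 <= s <= t /\ v = d (f s x) (f s y)).

Definition separated (t delta : R) (E : list X) : Prop :=
  forall x y, In x E -> In y E -> x <> y -> Rbar_lt (Finite delta) (dt t x y).

Variable phi : X -> R.

Definition Phi0 (x : X) (t : R) : R := RInt (fun s => phi (f s x)) 0 t.

Definition Lambda0 (C : X -> R -> Prop) (delta t : R) : Rbar :=
  Lub_Rbar (fun v => exists E : list X, NoDup E /\
      (forall x, In x E -> C x t) /\ separated t delta E /\
      v = fold_right (fun x acc => exp (Phi0 x t) + acc) 0 E).

(* start time of the m-th orbit segment (0-based) given segment lengths
   ts and gap function g (g i = gap after segment i, 0-based):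
   sum_{i<m} (t_i + g i) *)
Fixpoint seg_start (ts : list R) (g : nat -> R) (m : nat) : R :=
  match m, ts with
  | O, _ => 0
  | S m', t :: ts' => t + g O + seg_start ts' (fun i => g (S i)) m'
  | S _, nil => 0
  end.

Definition W_specification (G' : X -> R -> Prop) (delta tau : R) : Prop :=
  exists gaps : list (X * R) -> nat -> R,
    (forall L : list (X * R), (forall p, In p L -> G' (fst p) (snd p)) ->
      (forall i, (S i < length L)%nat -> 0 <= gaps L i <= tau) /\
      exists y : X, forall j, (j < length L)%nat ->
        let p := nth j L (fst (hd (y, 0) L), 0) in
        Rbar_lt (dt (snd p)
                   (f (seg_start (map snd L) (gaps L) j) y) (fst p))
                (Finite delta)) /\
    (forall L1 L2 j,
       (forall p, In p L1 -> G' (fst p) (snd p)) ->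
       (forall p, In p L2 -> G' (fst p) (snd p)) ->
       firstn j L1 = firstn j L2 ->
       forall i, (S i < j)%nat -> gaps L1 i = gaps L2 i).

Definition Bowen_property (G : X -> R -> Prop) (zeta : R) : Prop :=
  exists K, forall x t, G x t -> forall y, Rbar_lt (dt t x y) (Finite zeta) ->
    Rabs (Phi0 x t - Phi0 y t) <= K.

End FlowDefs.

Definition Rbar_prod (l : list Rbar) : Rbar := fold_right Rbar_mult (Finite 1) l.

(* Main.v *)
Require Import Defs.
From Stdlib Require Import Reals List Lra Lia Classical ZArith ClassicalEpsilon.
From Coquelicot Require Import Coquelicot.
Open Scope R_scope.


Definition sumR (l : list R) : R := fold_right Rplus 0 l.
Definition prodR (l : list R) : R := fold_right Rmult 1 l.

Lemma Rbar_mult_nonneg (x y : Rbar) :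
  Rbar_le 0 x -> Rbar_le 0 y -> Rbar_le 0 (Rbar_mult x y).
Proof.
  destruct x as [x| |], y as [y| |]; simpl; intros Hx Hy; try contradiction;
  unfold Rbar_mult, Rbar_mult'; simpl; try (apply Rmult_le_pos; auto);
  repeat (destruct Rle_dec; try destruct Rle_lt_or_eq_dec); simpl; auto; try lra.
Qed.

Lemma Rbar_mult_pos_pinf (v : R) : 0 < v -> Rbar_mult (Finite v) p_infty = p_infty.
Proof.
  intros H; unfold Rbar_mult, Rbar_mult';
  repeat (destruct Rle_dec; try destruct Rle_lt_or_eq_dec); auto; lra.
Qed.

Lemma lub_ub (E : R -> Prop) v : E v -> Rbar_le (Finite v) (Lub_Rbar E).
Proof. intros H; destruct (Lub_Rbar_correct E) as [H1 _]; apply H1; auto. Qed.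

Lemma lub_least (E : R -> Prop) b : (forall v, E v -> v <= b) -> Rbar_le (Lub_Rbar E) (Finite b).
Proof. intros H; destruct (Lub_Rbar_correct E) as [_ H2]; apply H2; intros x Hx; simpl; auto. Qed.

Lemma prod_lub_nonneg (S : R -> R -> Prop) ts : (forall t, S t 0) ->
  Rbar_le 0 (Rbar_prod (map (fun t => Lub_Rbar (S t)) ts)).
Proof.
  intros H0; induction ts as [|t ts IH]; simpl.
  - lra.
  - apply Rbar_mult_nonneg; auto. apply lub_ub; auto.
Qed.

Lemma prod_lub_le (S : R -> R -> Prop) (ts : list R) : forall b,
  (forall t, S t 0) -> (forall t v, S t v -> 0 <= v) ->
  (forall vs, Forall2 S ts vs -> prodR vs <= b) ->
  Rbar_le (Rbar_prod (map (fun t => Lub_Rbar (S t)) ts)) (Finite b).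
Proof.
  intros b H0 Hpos; revert b; induction ts as [|t ts IH]; intros b Hb; simpl.
  - apply (Hb nil); constructor.
  - assert (Hb0 : 0 <= b).
    { assert (Hz : Forall2 S (t :: ts) (map (fun _ => 0) (t :: ts))).
      { clear -H0. induction (t :: ts); simpl; constructor; auto. }
      specialize (Hb _ Hz); simpl in Hb; lra. }
    set (P := Rbar_prod (map (fun t0 : R => Lub_Rbar (S t0)) ts)).
    assert (HP0 : Rbar_le 0 P) by (apply prod_lub_nonneg; auto).
    assert (Step : forall v, S t v -> Rbar_le (Rbar_mult (Finite v) P) (Finite b)).
    { intros v Hv. destruct (Rle_lt_or_eq_dec 0 v (Hpos _ _ Hv)) as [Hv0|Hv0].
      - assert (HI : Rbar_le P (Finite (b / v))).
        { apply IH. intros vs Hvs. specialize (Hb (v :: vs) (Forall2_cons _ _ Hv Hvs)).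
          simpl in Hb. apply Rmult_le_reg_l with v; auto.
          field_simplify; lra. }
        destruct P as [p| |]; simpl in HI, HP0 |- *; try contradiction.
        apply Rmult_le_reg_r with (/ v). apply Rinv_0_lt_compat; auto.
        replace (v * p * / v) with p by (field; lra). exact HI.
      - subst v. rewrite Rbar_mult_0_l. simpl. auto. }
    destruct P as [p| |]; simpl in HP0; try contradiction.
    + destruct (Rle_lt_or_eq_dec 0 p HP0) as [Hp|Hp].
      * assert (HL : Rbar_le (Lub_Rbar (S t)) (Finite (b / p))).
        { apply lub_least. intros v Hv. specialize (Step v Hv). simpl in Step.
          apply Rmult_le_reg_r with p; auto. field_simplify; lra. }
        assert (HL0 : Rbar_le 0 (Lub_Rbar (S t))) by (apply lub_ub; auto).
        destruct (Lub_Rbar (S t)) as [l| |]; simpl in HL, HL0 |- *; try contradiction.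
        apply Rmult_le_reg_r with (/ p). apply Rinv_0_lt_compat; auto.
        replace (l * p * / p) with l by (field; lra). exact HL.
      * subst p. rewrite Rbar_mult_0_r. simpl; auto.
    + assert (HL : Rbar_le (Lub_Rbar (S t)) (Finite 0)).
      { apply lub_least. intros v Hv. specialize (Step v Hv).
        destruct (Rle_lt_or_eq_dec 0 v (Hpos _ _ Hv)) as [Hv0|Hv0]; [|lra].
        rewrite Rbar_mult_pos_pinf in Step; auto. simpl in Step. contradiction. }
      assert (HL0 : Rbar_le 0 (Lub_Rbar (S t))) by (apply lub_ub; auto).
      destruct (Lub_Rbar (S t)) as [l| |]; simpl in HL, HL0; try contradiction.
      replace l with 0 by lra. rewrite Rbar_mult_0_l. simpl; auto.
Qed.

Lemma Rabs_le_inv (x y : R) : Rabs x <= y -> -y <= x <= y.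
Proof. unfold Rabs; destruct Rcase_abs; lra. Qed.

Lemma plus_R (u v : R) : plus u v = u + v.
Proof. reflexivity. Qed.


Lemma dt_ge {X} (d : X -> X -> R) f t x y s : 0 <= s <= t ->
  Rbar_le (Finite (d (f s x) (f s y))) (dt d f t x y).
Proof. intros Hs; unfold dt; apply lub_ub; exists s; auto. Qed.

Lemma dt_lt_pt {X} (d : X -> X -> R) f t x y s e : Rbar_lt (dt d f t x y) (Finite e) ->
  0 <= s <= t -> d (f s x) (f s y) < e.
Proof.
  intros H Hs. pose proof (dt_ge d f t x y s Hs) as H1.
  exact (Rbar_le_lt_trans _ _ _ H1 H).
Qed.

Lemma dt_gt_ex {X} (d : X -> X -> R) f t x y e : Rbar_lt (Finite e) (dt d f t x y) ->
  exists s, 0 <= s <= t /\ e < d (f s x) (f s y).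
Proof.
  intros H. apply NNPP; intros Hn.
  assert (Hle : Rbar_le (dt d f t x y) (Finite e)).
  { unfold dt; apply lub_least. intros v [s [Hs ->]].
    apply Rnot_lt_le; intros Hl; apply Hn; exists s; auto. }
  exact (Rbar_lt_not_le _ _ H Hle).
Qed.

Lemma dt_sym {X} (d : X -> X -> R) f t x y : (forall a b, d a b = d b a) ->
  dt d f t x y = dt d f t y x.
Proof.
  intros Hd; unfold dt; apply Lub_Rbar_eqset; intros v; split;
  intros [s [Hs ->]]; exists s; split; auto.
Qed.

Lemma cont_comp {X} (d : X -> X -> R) f phi y s :
  is_metric d -> is_continuous_flow d f -> is_continuous_fun d phi ->
  continuous (fun u => phi (f u y)) s.
Proof.
  intros Hm Hf Hp. apply continuity_pt_filterlim.
  unfold continuity_pt, continue_in, limit1_in, limit_in. simpl.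
  intros eps Heps. destruct (Hp (f s y) eps Heps) as [e1 [He1 H1]].
  destruct Hf as [_ [_ Hc]]. destruct (Hc s y e1 He1) as [e2 [He2 H2]].
  exists e2; split; auto. intros s' [_ Hs']. unfold R_dist in *.
  apply H1. apply H2; auto. destruct Hm as [_ [Hd0 _]].
  rewrite (proj2 (Hd0 y y) eq_refl); auto.
Qed.

Lemma exRInt_comp {X} (d : X -> X -> R) f phi y a b :
  is_metric d -> is_continuous_flow d f -> is_continuous_fun d phi ->
  ex_RInt (fun u => phi (f u y)) a b.
Proof. intros; apply (ex_RInt_continuous (V := R_CompleteNormedModule)); intros; apply cont_comp with d; auto. Qed.

Lemma RInt_shift {X} (d : X -> X -> R) f phi y a t :
  is_metric d -> is_continuous_flow d f -> is_continuous_fun d phi ->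
  RInt (fun u => phi (f u y)) a (a + t) = Phi0 f phi (f a y) t.
Proof.
  intros Hm Hf Hp. unfold Phi0.
  assert (Hex : ex_RInt (fun u => phi (f u y)) (1 * 0 + a) (1 * t + a)) by (apply exRInt_comp with d; auto).
  pose proof (RInt_comp_lin (V:=R_CompleteNormedModule) (fun u => phi (f u y)) 1 a 0 t Hex) as Hc.
  replace (1*0+a) with a in Hc by ring. replace (1*t+a) with (a+t) in Hc by ring.
  rewrite <- Hc. apply RInt_ext. intros x _. change (scal 1 (phi (f (1 * x + a) y))) with (1 * phi (f (1 * x + a) y)). rewrite Rmult_1_l. destruct Hf as [_ [Hfl _]].
  rewrite <- Hfl. f_equal. f_equal. ring.
Qed.


Lemma RInt_addconst (g : R -> R) M a b : ex_RInt g a b ->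
  RInt (fun u => g u + M) a b = RInt g a b + (b - a) * M.
Proof.
  intros Hg.
  pose proof (RInt_plus (V:=R_CompleteNormedModule) g (fun _ => M) a b Hg (ex_RInt_const _ _ _)) as H.
  etransitivity; [exact H|]. rewrite (RInt_const (V:=R_CompleteNormedModule)). reflexivity.
Qed.

Lemma exRInt_H {X} (d : X -> X -> R) f phi y M a b :
  is_metric d -> is_continuous_flow d f -> is_continuous_fun d phi ->
  ex_RInt (fun u => phi (f u y) + M) a b.
Proof.
  intros. apply (ex_RInt_plus (V:=R_CompleteNormedModule) (fun u => phi (f u y)) (fun _ => M)).
  apply exRInt_comp with d; auto. apply ex_RInt_const.
Qed.

Lemma seg_int {X} (d : X -> X -> R) f phi (G : X -> R -> Prop) y M K tau delta zeta x0 :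
  is_metric d -> is_continuous_flow d f -> is_continuous_fun d phi ->
  (forall x, Rabs (phi x) <= M) -> delta < zeta ->
  (forall x t, G x t -> forall z, Rbar_lt (dt d f t x z) (Finite zeta) ->
      Rabs (Phi0 f phi x t - Phi0 f phi z t) <= K) ->
  forall ts xs g a c e, length xs = length ts -> c <= a ->
  a + sumR ts + INR (length ts - 1) * tau <= e ->
  (forall i, (S i < length ts)%nat -> 0 <= g i <= tau) ->
  (forall j, (j < length ts)%nat -> G (nth j xs x0) (nth j ts 0) /\
     Rbar_lt (dt d f (nth j ts 0) (f (a + seg_start ts g j) y) (nth j xs x0)) (Finite delta)) ->
  sumR (map (fun p => Phi0 f phi (fst p) (snd p) - K + M * snd p) (combine xs ts))
   <= RInt (fun u => phi (f u y) + M) c e.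
Proof.
  intros Hm Hf Hp HM Hdz HB.
  assert (Hsym : forall a b, d a b = d b a) by (destruct Hm as [_ [_ [H _]]]; auto).
  assert (Hnn : forall a b, a <= b -> 0 <= RInt (fun u => phi (f u y) + M) a b).
  { intros a b Hab. apply RInt_ge_0; auto. apply exRInt_H with d; auto.
    intros u _. specialize (HM (f u y)). apply Rabs_le_inv in HM. lra. }
  induction ts as [|t ts IH]; intros xs g a c e Hl Hca Hae Hg Hj.
  - destruct xs; simpl in Hl; try discriminate. simpl. apply Hnn.
    simpl in Hae. lra.
  - destruct xs as [|x xs]; simpl in Hl; try discriminate. injection Hl as Hl.
    destruct (Hj O ltac:(simpl; lia)) as [HG0 Hd0]. simpl in HG0, Hd0.
    rewrite Rplus_0_r in Hd0.
    assert (Ex : forall p q, ex_RInt (fun u => phi (f u y) + M) p q) by (intros; apply exRInt_H with d; auto).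
    assert (E1 : RInt (fun u => phi (f u y) + M) c a + RInt (fun u => phi (f u y) + M) a e
      = RInt (fun u => phi (f u y) + M) c e) by (exact (RInt_Chasles (V:=R_CompleteNormedModule) _ c a e (Ex _ _) (Ex _ _))).
    assert (E2 : RInt (fun u => phi (f u y) + M) a (a + t) + RInt (fun u => phi (f u y) + M) (a + t) e
      = RInt (fun u => phi (f u y) + M) a e) by (exact (RInt_Chasles (V:=R_CompleteNormedModule) _ a (a + t) e (Ex _ _) (Ex _ _))).
    rewrite <- E1, <- E2.
    assert (Hmid : Phi0 f phi x t - K + M * t <= RInt (fun u => phi (f u y) + M) a (a + t)).
    { rewrite RInt_addconst by (apply exRInt_comp with d; auto).
      rewrite (RInt_shift d) by auto.
      assert (Hb : Rbar_lt (dt d f t x (f a y)) (Finite zeta)).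
      { rewrite dt_sym by auto. eapply Rbar_lt_trans; [exact Hd0|]. simpl; auto. }
      specialize (HB x t HG0 _ Hb). apply Rabs_le_inv in HB. lra. }
    pose proof (Hnn c a Hca).
    simpl. fold (sumR (map (fun p => Phi0 f phi (fst p) (snd p) - K + M * snd p) (combine xs ts))).
    destruct ts as [|t' ts'].
    + destruct xs; simpl in Hl; try discriminate. simpl.
      assert (0 <= RInt (fun u => phi (f u y) + M) (a + t) e) by (apply Hnn; simpl in Hae; lra).
      lra.
    + assert (HI := IH xs (fun i => g (S i)) (a + t + g O) (a + t) e Hl).
      assert (Hg0 : 0 <= g O <= tau) by (apply Hg; simpl; lia).
      assert (HI2 : sumR (map (fun p => Phi0 f phi (fst p) (snd p) - K + M * snd p) (combine xs (t' :: ts')))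
              <= RInt (fun u => phi (f u y) + M) (a + t) e).
      { apply HI.
        - lra.
        - replace (length (t :: t' :: ts') - 1)%nat with (S (length ts')) in Hae by (simpl; lia).
          replace (length (t' :: ts') - 1)%nat with (length ts') by (simpl; lia).
          rewrite S_INR in Hae. unfold sumR in *. simpl in Hae |- *. lra.
        - intros i Hi. apply Hg. simpl in *. lia.
        - intros j Hjl. destruct (Hj (S j) ltac:(simpl in *; lia)) as [H1 H2].
          split; auto. simpl in H2. replace (a + t + g O + seg_start (t' :: ts') (fun i => g (S i)) j)
            with (a + (t + g O + seg_start (t' :: ts') (fun i => g (S i)) j)) by ring. exact H2. }
      lra.
Qed.


Lemma fold_max_ge (l : list nat) n : In n l -> (n <= fold_right max 0%nat l)%nat.
Proof. induction l as [|a l IH]; simpl; [tauto|]. intros [->|H]; [lia|]. specialize (IH H); lia. Qed.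

Lemma phi_bounded {X} (d : X -> X -> R) phi :
  is_metric d -> is_compact d -> is_continuous_fun d phi ->
  exists M, 0 <= M /\ forall x, Rabs (phi x) <= M.
Proof.
  intros Hm Hc Hp.
  destruct (Hc nat (fun n x => Rabs (phi x) < INR n)) as [l Hl].
  - intros n x Hx. destruct (Hp x (INR n - Rabs (phi x)) ltac:(lra)) as [e [He H]].
    exists e; split; auto. intros y Hy. specialize (H y Hy).
    pose proof (Rabs_triang_inv (phi y) (phi x)). lra.
  - intros x. destruct (archimed (Rabs (phi x))) as [H1 _].
    assert (Hz : (0 <= up (Rabs (phi x)))%Z).
    { apply le_IZR. pose proof (Rabs_pos (phi x)). simpl. lra. }
    exists (Z.to_nat (up (Rabs (phi x)))). rewrite INR_IZR_INZ, Z2Nat.id by exact Hz. lra.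
  - exists (INR (fold_right max 0%nat l)). split; [apply pos_INR|].
    intros x. destruct (Hl x) as [n [Hn Hx]]. apply Rlt_le, Rlt_le_trans with (1 := Hx).
    apply le_INR, fold_max_ge; auto.
Qed.

Lemma min_pos_list {X} (l : list (X * R)) : exists eta, 0 < eta /\
  forall p, In p l -> 0 < snd p -> eta <= snd p.
Proof.
  induction l as [|p l [e [He H]]].
  - exists 1; split; [lra|]; simpl; tauto.
  - destruct (Rlt_dec 0 (snd p)) as [Hp|Hp].
    + exists (Rmin e (snd p)); split; [apply Rmin_pos; auto|].
      intros q [<-|Hq] Hq0; [apply Rmin_r|]. eapply Rle_trans; [apply Rmin_l|]. auto.
    + exists e; split; auto. intros q [<-|Hq] Hq0; [contradiction|]; auto.
Qed.

Lemma flow_unif {X} (d : X -> X -> R) f :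
  is_metric d -> is_compact d -> is_continuous_flow d f ->
  forall eps, 0 < eps -> exists eta, 0 < eta /\
    forall w h, Rabs h < eta -> d (f h w) w < eps.
Proof.
  intros Hm Hc Hf eps Heps.
  destruct Hm as [Hd0 [Hdeq [Hsym Htri]]].
  destruct Hf as [Hf0 [_ Hfc]].
  destruct (Hc (X * R)%type (fun p w => 0 < snd p /\ snd p <= eps / 2 /\
      (forall s' x', Rabs (s' - 0) < snd p -> d (fst p) x' < snd p ->
          d (f 0 (fst p)) (f s' x') < eps / 2) /\ d (fst p) w < snd p)) as [l Hl].
  - intros p w [H1 [H2 [H3 H4]]]. exists (snd p - d (fst p) w). split; [lra|].
    intros z Hz. repeat split; auto. specialize (Htri (fst p) w z). lra.
  - intros w. destruct (Hfc 0 w (eps / 2) ltac:(lra)) as [e [He H]].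
    exists (w, Rmin e (eps / 2)). simpl. repeat split.
    + apply Rmin_pos; lra.
    + apply Rmin_r.
    + intros s' x' H1 H2. apply H. eapply Rlt_le_trans; [exact H1| apply Rmin_l].
      eapply Rlt_le_trans; [exact H2| apply Rmin_l].
    + rewrite (proj2 (Hdeq w w) eq_refl). apply Rmin_pos; lra.
  - destruct (min_pos_list l) as [eta [Heta Hmin]].
    exists eta; split; auto. intros w h Hh.
    destruct (Hl w) as [p [Hp [H1 [H2 [H3 H4]]]]].
    specialize (Hmin p Hp H1).
    assert (Hq : d (f 0 (fst p)) (f h w) < eps / 2).
    { apply H3; auto. rewrite Rminus_0_r; lra. }
    rewrite Hf0 in Hq. specialize (Htri (f h w) (fst p) w). pose proof (Hsym (fst p) (f h w)). lra.
Qed.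


Definition tuples {X} (Es : list (list X)) : list (list X) :=
  fold_right (fun E acc => flat_map (fun x => map (cons x) acc) E) (nil :: nil) Es.

Lemma In_tuples {X} (Es : list (list X)) tup : In tup (tuples Es) ->
  Forall2 (fun x E => In x E) tup Es.
Proof.
  revert tup; induction Es as [|E Es IH]; simpl; intros tup H.
  - destruct H as [<-|[]]; constructor.
  - apply in_flat_map in H. destruct H as [x [Hx H]]. apply in_map_iff in H.
    destruct H as [tup' [<- H]]. constructor; auto.
Qed.

Lemma NoDup_tuples {X} (Es : list (list X)) : List.Forall (fun E : list X => NoDup E) Es -> NoDup (tuples Es).
Proof.
  induction Es as [|E Es IH]; simpl; intros H.
  - constructor; [simpl; tauto| constructor].
  - inversion H as [|? ? HE HEs]; subst. specialize (IH HEs).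
    clear H. induction E as [|x E IHE]; simpl; [constructor|].
    inversion HE as [|? ? Hx HE']; subst.
    apply NoDup_app.
    + apply NoDup_map_NoDup_ForallPairs; auto. intros a b _ _ Hab; injection Hab; auto.
    + apply IHE; auto.
    + intros a Ha Hb. apply in_map_iff in Ha. destruct Ha as [t [<- _]].
      apply in_flat_map in Hb. destruct Hb as [x' [Hx' Hb]]. apply in_map_iff in Hb.
      destruct Hb as [t' [Heq _]]. injection Heq as -> _. contradiction.
Qed.

Lemma sumR_app l1 l2 : sumR (l1 ++ l2) = sumR l1 + sumR l2.
Proof. induction l1; simpl; unfold sumR in *; simpl; try rewrite IHl1; ring. Qed.

Lemma sumR_flat_map {A B} (F : B -> R) (g : A -> list B) l :
  sumR (map F (flat_map g l)) = sumR (map (fun a => sumR (map F (g a))) l).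
Proof. induction l as [|a l IH]; simpl; auto. rewrite map_app, sumR_app, IH; reflexivity. Qed.

Lemma sumR_mult_r {A} (F : A -> R) c l :
  sumR (map (fun a => F a * c) l) = sumR (map F l) * c.
Proof. induction l as [|a l IH]; unfold sumR in *; simpl; [ring|]. rewrite IH; ring. Qed.

Lemma sumR_fold {A} (F : A -> R) l : fold_right (fun x acc => F x + acc) 0 l = sumR (map F l).
Proof. induction l; simpl; auto. unfold sumR in *; simpl; rewrite IHl; auto. Qed.

Definition weight {X} (F : X -> R -> R) (tup : list X) (ts : list R) : R :=
  prodR (map (fun p => F (fst p) (snd p)) (combine tup ts)).

Lemma sum_tuples {X} (F : X -> R -> R) (Es : list (list X)) ts :
  length Es = length ts ->
  sumR (map (fun tup => weight F tup ts) (tuples Es)) =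
  prodR (map (fun p => sumR (map (fun x => F x (snd p)) (fst p))) (combine Es ts)).
Proof.
  revert ts; induction Es as [|E Es IH]; intros ts Hl; destruct ts as [|t ts]; simpl in *; try discriminate.
  - unfold sumR, prodR, weight; simpl; ring.
  - injection Hl as Hl. rewrite sumR_flat_map. unfold prodR at 1; simpl. fold (prodR (map (fun p => sumR (map (fun x => F x (snd p)) (fst p))) (combine Es ts))).
    rewrite <- IH by auto. rewrite <- sumR_mult_r. f_equal. apply map_ext. intros x.
    rewrite map_map. unfold weight at 1. simpl.
    rewrite Rmult_comm, <- sumR_mult_r. f_equal. apply map_ext; intros tup. unfold weight. ring.
Qed.

Lemma seg_nonneg ts g j : (forall t, In t ts -> 0 <= t) ->
  (forall i, (S i < length ts)%nat -> 0 <= g i) -> (j < length ts)%nat ->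
  0 <= seg_start ts g j.
Proof.
  revert g j; induction ts as [|t ts IH]; intros g j Ht Hg Hj; simpl in *; [lia|].
  destruct j as [|j]; simpl; [lra|].
  assert (0 <= t) by auto. assert (0 <= g O) by (apply Hg; lia).
  assert (0 <= seg_start ts (fun i => g (S i)) j).
  { apply IH; auto. intros i Hi; apply Hg; lia. lia. }
  lra.
Qed.

Lemma sumR_nonneg ts : (forall t, In t ts -> 0 <= t) -> 0 <= sumR ts.
Proof. induction ts as [|t ts IH]; unfold sumR; simpl; intros H; [lra|].
  fold (sumR ts). assert (0 <= t) by auto. assert (0 <= sumR ts) by auto. lra. Qed.

Lemma seg_upper ts g tau j : (forall t, In t ts -> 0 <= t) ->
  (forall i, (S i < length ts)%nat -> 0 <= g i <= tau) -> (j < length ts)%nat ->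
  seg_start ts g j + nth j ts 0 <= sumR ts + INR (length ts - 1) * tau.
Proof.
  revert g j; induction ts as [|t ts IH]; intros g j Ht Hg Hj; simpl in *; [lia|].
  assert (Hs : 0 <= sumR ts) by (apply sumR_nonneg; auto).
  unfold sumR at 1; simpl; fold (sumR ts).
  destruct ts as [|t' ts'].
  - destruct j as [|j]; [|simpl in Hj; lia]. simpl. unfold sumR; simpl. lra.
  - replace (length (t' :: ts') - 0)%nat with (S (length ts')) by (simpl; lia).
    assert (Hg0 : 0 <= g O <= tau) by (apply Hg; simpl; lia).
    rewrite S_INR. assert (0 <= INR (length ts')) by apply pos_INR.
    destruct j as [|j].
    + simpl. change (0 <= t' + sumR ts') in Hs. assert (0 <= INR (length ts') * tau) by (apply Rmult_le_pos; lra). lra.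
    + change (seg_start (t :: t' :: ts') g (S j)) with (t + g O + seg_start (t' :: ts') (fun i => g (S i)) j).
      change (nth (S j) (t :: t' :: ts') 0) with (nth j (t' :: ts') 0).
      assert (HI := IH (fun i => g (S i)) j ltac:(auto) ltac:(intros i Hi; apply Hg; simpl in *; lia) ltac:(simpl in *; lia)).
      replace (length (t' :: ts') - 1)%nat with (length ts') in HI by (simpl; lia).
      lra.
Qed.

Lemma seg_start_0 ts g : seg_start ts g 0 = 0.
Proof. destruct ts; reflexivity. Qed.

Lemma seg_start_S t ts g j : seg_start (t :: ts) g (S j) = t + g O + seg_start ts (fun i => g (S i)) j.
Proof. reflexivity. Qed.

Lemma seg_diff ts g g' j eta : 0 < eta ->
  (forall i, (S i < j)%nat -> g i = g' i) ->
  ((1 <= j)%nat -> Rabs (g (j - 1)%nat - g' (j - 1)%nat) < eta) ->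
  Rabs (seg_start ts g j - seg_start ts g' j) < eta.
Proof.
  revert g g' j; induction ts as [|t ts IH]; intros g g' j He Hg Hj.
  - destruct j; simpl; rewrite Rminus_0_r, Rabs_R0; auto.
  - destruct j as [|j]; [rewrite !seg_start_0, Rminus_0_r, Rabs_R0; auto|].
    rewrite !seg_start_S.
    destruct j as [|j].
    + rewrite !seg_start_0. specialize (Hj ltac:(lia)). simpl in Hj.
      replace (t + g O + 0 - (t + g' O + 0)) with (g O - g' O) by ring. auto.
    + rewrite (Hg O) by lia.
      replace (t + g' O + seg_start ts (fun i => g (S i)) (S j) - (t + g' O + seg_start ts (fun i => g' (S i)) (S j)))
        with (seg_start ts (fun i => g (S i)) (S j) - seg_start ts (fun i => g' (S i)) (S j)) by ring.
      apply IH; auto.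
      * intros i Hi. apply Hg. lia.
      * intros _. specialize (Hj ltac:(lia)). replace (S (S j) - 1)%nat with (S (S j - 1)) in Hj by lia. exact Hj.
Qed.


Lemma Int_part_nonneg r : 0 <= r -> (0 <= Int_part r)%Z.
Proof.
  intros H. destruct (base_Int_part r) as [_ H2].
  assert (H3 : (-1 < Int_part r)%Z) by (apply lt_IZR; simpl; lra). lia.
Qed.

Lemma Int_part_mono x y : x <= y -> (Int_part x <= Int_part y)%Z.
Proof.
  intros H. destruct (base_Int_part x) as [H1 _]. destruct (base_Int_part y) as [_ H2].
  assert (H3 : (Int_part x < Int_part y + 1)%Z) by (apply lt_IZR; rewrite plus_IZR; simpl; lra). lia.
Qed.

Definition cidx (eta a : R) : nat := Z.to_nat (Int_part (a / eta)).

Lemma cidx_close eta a b : 0 < eta -> 0 <= a -> 0 <= b -> cidx eta a = cidx eta b ->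
  Rabs (a - b) < eta.
Proof.
  unfold cidx; intros He Ha Hb H.
  assert (Ha' : 0 <= a / eta) by (apply Rmult_le_pos; [lra| apply Rlt_le, Rinv_0_lt_compat; lra]).
  assert (Hb' : 0 <= b / eta) by (apply Rmult_le_pos; [lra| apply Rlt_le, Rinv_0_lt_compat; lra]).
  pose proof (Int_part_nonneg _ Ha'); pose proof (Int_part_nonneg _ Hb').
  assert (Heq : Int_part (a / eta) = Int_part (b / eta)) by lia.
  destruct (base_Int_part (a / eta)) as [A1 A2]. destruct (base_Int_part (b / eta)) as [B1 B2].
  rewrite Heq in A1, A2.
  assert (Hd : Rabs (a / eta - b / eta) < 1) by (apply Rabs_def1; lra).
  replace (a - b) with (eta * (a / eta - b / eta)) by (field; lra).
  rewrite Rabs_mult, Rabs_pos_eq by lra. 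
  pose proof (Rmult_lt_compat_l eta _ _ He Hd). lra.
Qed.

Lemma cidx_bound eta a tau : 0 < eta -> 0 <= a <= tau ->
  (cidx eta a < S (cidx eta tau))%nat.
Proof.
  unfold cidx; intros He Ha.
  assert (Ha' : 0 <= a / eta) by (apply Rmult_le_pos; [lra| apply Rlt_le, Rinv_0_lt_compat; lra]).
  assert (Hat : a / eta <= tau / eta) by (apply Rmult_le_compat_r; [apply Rlt_le, Rinv_0_lt_compat; lra| lra]).
  pose proof (Int_part_nonneg _ Ha'). pose proof (Int_part_mono _ _ Hat). lia.
Qed.

Fixpoint allcells (n N : nat) : list (list nat) :=
  match n with
  | O => nil :: nil
  | S n' => flat_map (fun i => map (cons i) (allcells n' N)) (seq 0 N)
  end.

Lemma allcells_in n N c : length c = n -> (forall x, In x c -> (x < N)%nat) -> In c (allcells n N).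
Proof.
  revert c; induction n as [|n IH]; intros c Hl Hc; destruct c as [|i c]; simpl in *; try discriminate; auto.
  apply in_flat_map. exists i; split.
  - apply in_seq. specialize (Hc i (or_introl eq_refl)). lia.
  - apply in_map. apply IH; auto.
Qed.

Lemma length_flat_map_map {A B} (h : A -> B -> B) (l : list B) (l' : list A) :
  length (flat_map (fun x => map (h x) l) l') = (length l' * length l)%nat.
Proof. induction l' as [|a l' IH]; simpl; auto. rewrite length_app, length_map, IH; lia. Qed.

Lemma allcells_length n N : length (allcells n N) = (N ^ n)%nat.
Proof. induction n as [|n IH]; simpl; auto. rewrite length_flat_map_map, length_seq, IH. lia. Qed.

Lemma sumR_map_plus {A} (F1 F2 : A -> R) l :
  sumR (map (fun x => F1 x + F2 x) l) = sumR (map F1 l) + sumR (map F2 l).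
Proof. induction l; unfold sumR in *; simpl; [ring|]. rewrite IHl; ring. Qed.

Lemma sumR_zero {A} (l : list A) : sumR (map (fun _ => 0) l) = 0.
Proof. induction l; unfold sumR in *; simpl; auto. rewrite IHl; ring. Qed.

Lemma sumR_ind_ge (cs : list (list nat)) c0 a : 0 <= a -> In c0 cs ->
  a <= sumR (map (fun c => if list_eq_dec Nat.eq_dec c0 c then a else 0) cs).
Proof.
  intros Ha; induction cs as [|c cs IH]; simpl; [tauto|]. unfold sumR; simpl; fold (sumR (map (fun c => if list_eq_dec Nat.eq_dec c0 c then a else 0) cs)).
  assert (Hn : 0 <= sumR (map (fun c => if list_eq_dec Nat.eq_dec c0 c then a else 0) cs)).
  { clear IH; induction cs; unfold sumR in *; simpl; [lra|]. destruct list_eq_dec; lra. }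
  intros [->|H].
  - destruct list_eq_dec; [lra|congruence].
  - specialize (IH H). destruct list_eq_dec; lra.
Qed.

Lemma sum_cells {A} (w : A -> R) (cell : A -> list nat) (cs : list (list nat)) (l : list A) :
  (forall x, 0 <= w x) -> (forall x, In x l -> In (cell x) cs) ->
  sumR (map w l) <= sumR (map (fun c => sumR (map w (filter (fun x => if list_eq_dec Nat.eq_dec (cell x) c then true else false) l))) cs).
Proof.
  intros Hw; induction l as [|x l IH]; intros Hc.
  - simpl. rewrite sumR_zero. unfold sumR; simpl; lra.
  - simpl. unfold sumR at 1; simpl; fold (sumR (map w l)).
    rewrite (map_ext _ (fun c => (if list_eq_dec Nat.eq_dec (cell x) c then w x else 0) +
        sumR (map w (filter (fun x0 => if list_eq_dec Nat.eq_dec (cell x0) c then true else false) l)))).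
    + rewrite sumR_map_plus. pose proof (sumR_ind_ge cs (cell x) (w x) (Hw x) (Hc x (or_introl eq_refl))).
      specialize (IH (fun y Hy => Hc y (or_intror Hy))). lra.
    + intros c. destruct list_eq_dec; simpl; unfold sumR; simpl; ring.
Qed.

Lemma sumR_le_const {A} (F : A -> R) B cs : (forall c, In c cs -> F c <= B) ->
  sumR (map F cs) <= INR (length cs) * B.
Proof.
  induction cs as [|c cs IH]; intros H; [unfold sumR; simpl; lra|].
  change (sumR (map F (c :: cs))) with (F c + sumR (map F cs)).
  change (length (c :: cs)) with (S (length cs)). rewrite S_INR. specialize (IH (fun c' Hc' => H c' (or_intror Hc'))).
  specialize (H c (or_introl eq_refl)). lra.
Qed.


Lemma Forall2_nth {A B} (Rel : A -> B -> Prop) l1 l2 j d1 d2 :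
  Forall2 Rel l1 l2 -> (j < length l1)%nat -> Rel (nth j l1 d1) (nth j l2 d2).
Proof.
  intros H; revert j; induction H as [|a b l1 l2 Hab H IH]; intros j Hj; simpl in *; [lia|].
  destruct j; auto. apply IH; lia.
Qed.

Lemma In_combine_nth {A B} (l1 : list A) (l2 : list B) p d1 d2 :
  length l1 = length l2 -> In p (combine l1 l2) ->
  exists j, (j < length l1)%nat /\ p = (nth j l1 d1, nth j l2 d2).
Proof.
  intros Hl Hp. destruct (In_nth _ _ (d1, d2) Hp) as [j [Hj Hn]].
  rewrite length_combine in Hj. exists j; split; [lia|].
  rewrite <- Hn, combine_nth; auto.
Qed.

Lemma map_snd_combine {A B} (l1 : list A) (l2 : list B) :
  length l1 = length l2 -> map snd (combine l1 l2) = l2.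
Proof. revert l2; induction l1; intros [|b l2] H; simpl in *; try discriminate; auto. f_equal; auto. Qed.

Lemma first_diff {A} (a b : list A) x0 : length a = length b -> a <> b ->
  exists j, (j < length a)%nat /\ firstn j a = firstn j b /\ nth j a x0 <> nth j b x0.
Proof.
  revert b; induction a as [|u a IH]; intros [|v b] Hl Hne; simpl in *; try discriminate.
  - congruence.
  - injection Hl as Hl. destruct (classic (u = v)) as [->|Huv].
    + destruct (IH b Hl) as [j [Hj [H1 H2]]]; [congruence|].
      exists (S j); simpl; split; [lia|]; split; auto. f_equal; auto.
    + exists O; simpl; split; [lia|]; split; auto.
Qed.

Lemma prodR_exp {A} (F : A -> R) l : prodR (map (fun p => exp (F p)) l) = exp (sumR (map F l)).
Proof. induction l; unfold prodR, sumR in *; simpl; [rewrite exp_0; auto|]. rewrite IHl, exp_plus; auto. Qed.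

Lemma exp_pow x n : exp x ^ n = exp (INR n * x).
Proof. induction n; simpl; [rewrite Rmult_0_l, exp_0; auto|]. rewrite IHn, <- exp_plus. f_equal.
  destruct n; simpl; ring. Qed.

Lemma sum_lin {A} (F : A * R -> R) K M (l : list (A * R)) :
  sumR (map (fun p => F p - K + M * snd p) l) = sumR (map F l) - INR (length l) * K + M * sumR (map snd l).
Proof.
  induction l as [|p l IH]; [unfold sumR; simpl; ring|].
  change (sumR (map (fun p => F p - K + M * snd p) (p :: l))) with (F p - K + M * snd p + sumR (map (fun p => F p - K + M * snd p) l)).
  change (sumR (map F (p :: l))) with (F p + sumR (map F l)).
  change (sumR (map snd (p :: l))) with (snd p + sumR (map snd l)).
  change (length (p :: l)) with (S (length l)). rewrite S_INR, IH. ring.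
Qed.

Lemma sumR_le_pw {A} (F1 F2 : A -> R) l : (forall x, In x l -> F1 x <= F2 x) ->
  sumR (map F1 l) <= sumR (map F2 l).
Proof.
  induction l as [|a l IH]; intros H; unfold sumR in *; simpl; [lra|].
  specialize (IH (fun x Hx => H x (or_intror Hx))). specialize (H a (or_introl eq_refl)). lra.
Qed.

Lemma prodR_pos (l : list R) : (forall x, In x l -> 0 < x) -> 0 < prodR l.
Proof. induction l; unfold prodR; simpl; intros H; [lra|]. apply Rmult_lt_0_compat; auto. Qed.

Lemma sumR_nonneg' (l : list R) : (forall x, In x l -> 0 <= x) -> 0 <= sumR l.
Proof. induction l; unfold sumR; simpl; intros H; [lra|]. fold (sumR l).
  assert (0 <= a) by auto. assert (0 <= sumR l) by auto. lra. Qed.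

Lemma Rbar_le_pinf (x : Rbar) : Rbar_le x p_infty.
Proof. destruct x; simpl; auto. Qed.

Lemma extract {X} (P : R -> list X -> Prop) (F : X -> R -> R) ts vs :
  Forall2 (fun t v => exists E, P t E /\ v = fold_right (fun x acc => F x t + acc) 0 E) ts vs ->
  exists Es, Forall2 P ts Es /\
    prodR vs = prodR (map (fun p => sumR (map (fun x => F x (snd p)) (fst p))) (combine Es ts)).
Proof.
  induction 1 as [|t v ts vs Hv _ IH].
  - exists nil; split; [constructor|reflexivity].
  - destruct Hv as [E [HE Hveq]]. subst v. destruct IH as [Es [HEs Hp]]. exists (E :: Es); split; [constructor; auto|].
    change (prodR (fold_right (fun x acc => F x t + acc) 0 E :: vs)) with
      (fold_right (fun x acc => F x t + acc) 0 E * prodR vs).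
    rewrite Hp, sumR_fold. reflexivity.
Qed.

Lemma exp_mono x y : x <= y -> exp x <= exp y.
Proof. intros H; destruct (Rle_lt_or_eq_dec _ _ H) as [H1|H1]; [apply Rlt_le, exp_increasing; auto| rewrite H1; lra]. Qed.

Lemma nth_map_lt {A B} (F : A -> B) l n d dB : (n < length l)%nat -> nth n (map F l) dB = F (nth n l d).
Proof. intros H. rewrite (nth_indep _ _ (F d)) by (rewrite length_map; auto). apply map_nth. Qed.


Theorem proposition4p3 :
  forall (X : Type) (d : X -> X -> R) (f : R -> X -> X) (phi : X -> R)
         (G : X -> R -> Prop) (T0 delta tau zeta : R),
    is_metric d -> is_compact d -> is_continuous_flow d f ->
    is_continuous_fun d phi ->
    (forall x t, G x t -> 0 <= t) ->
    0 < delta ->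
    W_specification d f (fun x t => G x t /\ T0 <= t) delta tau ->
    delta < zeta ->
    Bowen_property d f phi G zeta ->
    forall gamma, 2 * zeta < gamma ->
    exists C1, 0 < C1 /\
      forall ts : list R, ts <> nil -> (forall t, In t ts -> T0 <= t) ->
        let k := length ts in
        let T := fold_right Rplus 0 ts + INR (k - 1) * tau in
        let theta := zeta - delta in
        Rbar_le (Rbar_prod (map (fun t => Lambda0 d f phi G gamma t) ts))
                (Rbar_mult (Finite (C1 ^ k))
                           (Lambda0 d f phi (fun _ _ => True) theta T)).
Proof.
  intros X d f phi G T0 delta tau zeta Hm Hc Hf Hp HG0 Hd Hspec Hdz HB gamma Hgam.
  destruct (phi_bounded d phi Hm Hc Hp) as [M [HM0 HM]].
  destruct HB as [K HK].
  assert (Heps : 0 < gamma - delta - zeta) by lra.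
  destruct (flow_unif d f Hm Hc Hf _ Heps) as [eta [Heta Hunif]].
  set (tau' := Rmax tau 0).
  assert (Htau' : tau <= tau' /\ 0 <= tau') by (split; [apply Rmax_l| apply Rmax_r]).
  set (N := S (cidx eta tau')).
  set (c0 := exp (K + M * tau')).
  assert (HN1 : 1 <= INR N) by (unfold N; rewrite S_INR; pose proof (pos_INR (cidx eta tau')); lra).
  assert (Hc0 : 0 < c0) by apply exp_pos.
  exists (INR N * c0). split; [nra|].
  intros ts Hts HT0. cbv zeta.
  destruct Hspec as [gaps [Hsp Hcons]].
  pose proof Hm as [Hdnn [Hdeq [Hsym Htri]]].
  pose proof Hf as [Hf0 [Hfl _]].
  assert (HLnn : Rbar_le 0 (Lambda0 d f phi (fun _ _ => True) (zeta - delta) (fold_right Rplus 0 ts + INR (length ts - 1) * tau))).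
  { unfold Lambda0. apply lub_ub. exists nil. split; [constructor|]. split; [simpl; tauto|].
    split; [intros x y []|reflexivity]. }
  assert (HCk : 0 < (INR N * c0) ^ length ts) by (apply pow_lt; nra).
  destruct (Lambda0 d f phi (fun _ _ => True) (zeta - delta) (fold_right Rplus 0 ts + INR (length ts - 1) * tau)) as [l| |] eqn:HL; simpl in HLnn; try contradiction.
  2: { rewrite Rbar_mult_pos_pinf; [apply Rbar_le_pinf| auto]. }
  change (Rbar_mult (Finite ((INR N * c0) ^ length ts)) (Finite l)) with (Finite ((INR N * c0) ^ length ts * l)).
  unfold Lambda0.
  apply (prod_lub_le (fun t v => exists E : list X, NoDup E /\ (forall x, In x E -> G x t) /\
     separated d f t gamma E /\ v = fold_right (fun x acc => exp (Phi0 f phi x t) + acc) 0 E)).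
  - intros t. exists nil. split; [constructor|]. split; [simpl; tauto|].
    split; [intros x y []|reflexivity].
  - intros t v [E [_ [_ [_ ->]]]]. rewrite sumR_fold. apply sumR_nonneg'.
    intros z Hz. apply in_map_iff in Hz. destruct Hz as [x [<- _]]. apply Rlt_le, exp_pos.
  - intros vs Hvs.
    assert (Hvs' : Forall2 (fun t v => exists E, (NoDup E /\ (forall x, In x E -> G x t) /\ separated d f t gamma E)
       /\ v = fold_right (fun x acc => exp (Phi0 f phi x t) + acc) 0 E) ts vs).
    { eapply Forall2_impl; [|exact Hvs]. intros t v [E [H1 [H2 [H3 H4]]]]. exists E; auto. }
    destruct (extract _ (fun x t => exp (Phi0 f phi x t)) ts vs Hvs') as [Es [HEs Hprod]].
    rewrite Hprod.
    assert (Hlen : length Es = length ts) by (symmetry; apply (Forall2_length HEs)).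
    rewrite <- (sum_tuples (fun x t => exp (Phi0 f phi x t)) Es ts Hlen).
    destruct (tuples Es) as [|tup1 rest] eqn:Htup.
    { change (sumR (map (fun tup => weight (fun x t => exp (Phi0 f phi x t)) tup ts) nil)) with 0. apply Rmult_le_pos; lra. }
    assert (Hin1 : In tup1 (tuples Es)) by (rewrite Htup; left; auto).
    rewrite <- Htup. clear Htup rest.
    pose proof (In_tuples _ _ Hin1) as Hf1. pose proof (Forall2_length Hf1) as Hl1.
    destruct tup1 as [|x0 tup1'].
    { destruct ts; [congruence|]. simpl in Hl1; rewrite Hlen in Hl1; simpl in Hl1; discriminate. }
    set (tup1 := x0 :: tup1') in *.
    set (k := length ts) in *.
    assert (Hk : (1 <= k)%nat) by (destruct ts; [congruence| unfold k; simpl; lia]).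
    assert (Hval : forall tup, In tup (tuples Es) ->
      length tup = k /\ (forall j, (j < k)%nat -> In (nth j tup x0) (nth j Es nil) /\ G (nth j tup x0) (nth j ts 0))).
    { intros tup Htu. apply In_tuples in Htu. pose proof (Forall2_length Htu) as Hlt. split; [lia|].
      intros j Hj. pose proof (Forall2_nth _ _ _ j x0 nil Htu ltac:(lia)) as H1.
      pose proof (Forall2_nth _ _ _ j 0 nil HEs ltac:(lia)) as [H2 [H3 H4]]. split; auto. }
    assert (Htnn : forall t, In t ts -> 0 <= t).
    { intros t Ht. destruct (In_nth _ _ 0 Ht) as [j [Hj <-]].
      destruct (Hval tup1 Hin1) as [_ Hv]. apply (HG0 (nth j tup1 x0)). apply Hv; auto. }
    assert (HvalL : forall tup, In tup (tuples Es) -> forall p, In p (combine tup ts) -> G (fst p) (snd p) /\ T0 <= snd p).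
    { intros tup Htu p Hp'. destruct (Hval tup Htu) as [Hlt Hv].
      destruct (In_combine_nth tup ts p x0 0 ltac:(lia) Hp') as [j [Hj ->]]. simpl.
      split; [apply Hv; lia|]. apply HT0. apply nth_In. lia. }
    set (Spec := fun tup y => forall j, (j < k)%nat -> Rbar_lt (dt d f (nth j ts 0) (f (seg_start ts (gaps (combine tup ts)) j) y) (nth j tup x0)) (Finite delta)).
    assert (Hex : forall tup, exists y, In tup (tuples Es) -> Spec tup y).
    { intros tup. destruct (classic (In tup (tuples Es))) as [Htu|Htu]; [|exists x0; tauto].
      destruct (Hval tup Htu) as [Hlt _].
      destruct (Hsp (combine tup ts) (HvalL tup Htu)) as [_ [y Hy]].
      exists y. intros _ j Hj.
      assert (HlL : length (combine tup ts) = k) by (rewrite length_combine; lia).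
      specialize (Hy j ltac:(lia)). cbv zeta in Hy.
      rewrite combine_nth in Hy by lia. cbn [fst snd] in Hy.
      rewrite map_snd_combine in Hy by lia.
      rewrite (nth_indep tup _ x0) in Hy by lia. exact Hy. }
    set (yof := fun tup => proj1_sig (constructive_indefinite_description _ (Hex tup))).
    assert (Hyof : forall tup, In tup (tuples Es) -> Spec tup (yof tup)).
    { intros tup Htu. unfold yof. destruct (constructive_indefinite_description _ (Hex tup)) as [y Hy]. simpl. auto. }
    assert (Hgb : forall tup, In tup (tuples Es) -> forall i, (S i < k)%nat -> 0 <= gaps (combine tup ts) i <= tau).
    { intros tup Htu i Hi. destruct (Hval tup Htu) as [Hlt _].
      destruct (Hsp (combine tup ts) (HvalL tup Htu)) as [Hb _]. apply Hb. rewrite length_combine; lia. }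
    set (T := fold_right Rplus 0 ts + INR (k - 1) * tau) in *.
    assert (Hw : forall tup, In tup (tuples Es) ->
      weight (fun x t => exp (Phi0 f phi x t)) tup ts <= c0 ^ k * exp (Phi0 f phi (yof tup) T)).
    { intros tup Htu. destruct (Hval tup Htu) as [Hlt Hv].
      pose proof (seg_int d f phi G (yof tup) M K tau delta zeta x0 Hm Hf Hp HM Hdz HK
        ts tup (gaps (combine tup ts)) 0 0 T ltac:(lia) (Rle_refl 0)) as HS.
      assert (HS2 : sumR (map (fun p => Phi0 f phi (fst p) (snd p) - K + M * snd p) (combine tup ts))
                    <= RInt (fun u => phi (f u (yof tup)) + M) 0 T).
      { apply HS.
        - unfold T, sumR, k. lra.
        - intros i Hi. apply Hgb; auto.
        - intros j Hj. split; [apply Hv; auto|]. rewrite Rplus_0_l. apply (Hyof tup Htu j Hj). }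
      rewrite RInt_addconst in HS2 by (apply exRInt_comp with d; auto).
      change (RInt (fun u => phi (f u (yof tup))) 0 T) with (Phi0 f phi (yof tup) T) in HS2.
      rewrite sum_lin, map_snd_combine, length_combine in HS2 by lia.
      replace (Init.Nat.min (length tup) (length ts)) with k in HS2 by (unfold k; lia).
      unfold weight. rewrite (prodR_exp (fun p => Phi0 f phi (fst p) (snd p))).
      unfold c0. rewrite exp_pow, <- exp_plus. apply exp_mono.
      assert (Hk1 : INR (k - 1) <= INR k) by (apply le_INR; lia).
      assert (Hk0 : 0 <= INR (k - 1)) by apply pos_INR.
      assert (H1 : INR (k - 1) * tau <= INR k * tau').
      { apply Rle_trans with (INR (k - 1) * tau'). apply Rmult_le_compat_l; lra.
        apply Rmult_le_compat_r; lra. }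
      assert (H2 : M * (INR (k - 1) * tau) <= M * (INR k * tau')) by (apply Rmult_le_compat_l; lra).
      unfold T in *. fold (sumR ts) in *. lra. }
    set (cell := fun tup => map (fun i => cidx eta (gaps (combine tup ts) i)) (seq 0 (k - 1))).
    set (cs := allcells (k - 1) N).
    set (w := fun tup => weight (fun x t => exp (Phi0 f phi x t)) tup ts).
    assert (Hwpos : forall tup, 0 <= w tup).
    { intros tup; unfold w, weight; apply Rlt_le, prodR_pos; intros z Hz; apply in_map_iff in Hz;
      destruct Hz as [p [<- _]]; apply exp_pos. }
    eapply Rle_trans; [apply (sum_cells w cell cs); auto|].
    { intros tup Htu. apply allcells_in. unfold cell; rewrite length_map, length_seq; auto.
      intros x Hx. apply in_map_iff in Hx. destruct Hx as [i [<- Hi]]. apply in_seq in Hi.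
      apply cidx_bound; auto. pose proof (Hgb tup Htu i ltac:(lia)). lra. }
    eapply Rle_trans; [apply (sumR_le_const _ (c0 ^ k * l))|].
    2: { unfold cs; rewrite allcells_length, pow_INR, Rpow_mult_distr.
         assert (HNk : INR N ^ (k - 1) <= INR N ^ k) by (apply Rle_pow; auto; lia).
         assert (0 <= c0 ^ k * l) by (apply Rmult_le_pos; [apply pow_le; lra| lra]).
         assert (HH : INR N ^ (k - 1) * (c0 ^ k * l) <= INR N ^ k * (c0 ^ k * l)) by (apply Rmult_le_compat_r; auto).
         lra. }
    intros c _.
    set (Lc := filter (fun x => if list_eq_dec Nat.eq_dec (cell x) c then true else false) (tuples Es)).
    assert (HLc : forall tup, In tup Lc -> In tup (tuples Es) /\ cell tup = c).
    { intros tup H. apply filter_In in H. destruct H as [H1 H2]. destruct list_eq_dec; [auto|discriminate]. }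
    assert (Hsep : forall a b, In a Lc -> In b Lc -> a <> b ->
       exists s, 0 <= s <= T /\ zeta - delta < d (f s (yof a)) (f s (yof b))).
    { intros a b Ha Hb Hab.
      destruct (HLc a Ha) as [Ha' Hca]. destruct (HLc b Hb) as [Hb' Hcb].
      destruct (Hval a Ha') as [Hla Hva]. destruct (Hval b Hb') as [Hlb Hvb].
      destruct (first_diff a b x0 ltac:(lia) Hab) as [j [Hj [Hfj Hnj]]].
      rewrite Hla in Hj.
      assert (Hgab : forall i, (S i < j)%nat -> gaps (combine a ts) i = gaps (combine b ts) i).
      { apply (Hcons (combine a ts) (combine b ts) j (HvalL a Ha') (HvalL b Hb')).
        rewrite !combine_firstn, Hfj. auto. }
      assert (Hsab : Rabs (seg_start ts (gaps (combine a ts)) j - seg_start ts (gaps (combine b ts)) j) < eta).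
      { apply seg_diff; auto. intros Hj1.
        assert (E1 : forall tup, nth (j - 1) (cell tup) O = cidx eta (gaps (combine tup ts) (j - 1)%nat)).
        { intros tup. unfold cell.
          rewrite (nth_map_lt _ _ _ O) by (rewrite length_seq; lia).
          rewrite seq_nth by lia. reflexivity. }
        assert (Hce : cidx eta (gaps (combine a ts) (j - 1)%nat) = cidx eta (gaps (combine b ts) (j - 1)%nat)).
        { rewrite <- !E1, Hca, Hcb. reflexivity. }
        apply cidx_close; auto.
        - apply (Hgb a Ha'). lia.
        - apply (Hgb b Hb'). lia. }
      destruct (Hva j Hj) as [Hxa _]. destruct (Hvb j Hj) as [Hxb _].
      pose proof (Forall2_nth _ _ _ j 0 nil HEs ltac:(lia)) as [_ [_ Hsepj]].
      specialize (Hsepj _ _ Hxa Hxb Hnj).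
      destruct (dt_gt_ex _ _ _ _ _ _ Hsepj) as [u [Hu Hgu]].
      pose proof (Hyof a Ha' j Hj) as Sa. pose proof (Hyof b Hb' j Hj) as Sb.
      set (sa := seg_start ts (gaps (combine a ts)) j) in *.
      set (sb := seg_start ts (gaps (combine b ts)) j) in *.
      pose proof (dt_lt_pt d f _ _ _ u _ Sa Hu) as Da.
      pose proof (dt_lt_pt d f _ _ _ u _ Sb Hu) as Db.
      pose proof (Hunif (f (u + sb) (yof b)) (sa - sb) Hsab) as Du.
      rewrite <- Hfl in Da, Db, Du.
      replace (sa - sb + (u + sb)) with (u + sa) in Du by ring.
      exists (u + sa). split.
      - assert (0 <= sa).
        { apply seg_nonneg; auto; try (intros i Hi; apply (Hgb a Ha'); unfold k in *; lia). }
        assert (sa + nth j ts 0 <= sumR ts + INR (length ts - 1) * tau).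
        { apply seg_upper; auto; try (intros i Hi; apply (Hgb a Ha'); unfold k in *; lia). }
        unfold T; fold (sumR ts); unfold k. lra.
      - pose proof (Htri (f u (nth j a x0)) (f (u + sa) (yof a)) (f u (nth j b x0))).
        pose proof (Htri (f (u + sa) (yof a)) (f (u + sa) (yof b)) (f u (nth j b x0))).
        pose proof (Htri (f (u + sa) (yof b)) (f (u + sb) (yof b)) (f u (nth j b x0))).
        pose proof (Hsym (f u (nth j a x0)) (f (u + sa) (yof a))).
        lra. }
    set (Y := map yof Lc).
    assert (HY : Rbar_le (Finite (sumR (map (fun y => exp (Phi0 f phi y T)) Y))) (Finite l)).
    { rewrite <- HL. unfold Lambda0. apply lub_ub. exists Y. split; [|split; [|split]].
      - apply NoDup_map_NoDup_ForallPairs.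
        + intros a b Ha Hb Hab. apply NNPP; intros Hne.
          destruct (Hsep a b Ha Hb Hne) as [s [_ Hs]]. rewrite Hab in Hs.
          rewrite (proj2 (Hdeq _ _) eq_refl) in Hs. lra.
        + apply NoDup_filter. apply NoDup_tuples.
          clear -HEs. induction HEs as [|t E ts Es [HE _] _ IH]; constructor; auto.
      - auto.
      - intros y1 y2 H1 H2 Hne. apply in_map_iff in H1. apply in_map_iff in H2.
        destruct H1 as [a [Hya Ha]]. destruct H2 as [b [Hyb Hb]].
        assert (Hab : a <> b) by (intros E; subst; auto).
        destruct (Hsep a b Ha Hb Hab) as [s [Hs1 Hs2]]. subst y1 y2.
        eapply Rbar_lt_le_trans; [|apply dt_ge; exact Hs1]. simpl. exact Hs2.
      - symmetry; apply sumR_fold. }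
    simpl in HY.
    eapply Rle_trans; [apply (sumR_le_pw _ (fun tup => c0 ^ k * exp (Phi0 f phi (yof tup) T)))|].
    { intros tup Htu. apply Hw. apply HLc; auto. }
    replace (sumR (map (fun tup => c0 ^ k * exp (Phi0 f phi (yof tup) T)) Lc))
      with (sumR (map (fun y => exp (Phi0 f phi y T)) Y) * c0 ^ k).
    2: { unfold Y; rewrite map_map, <- sumR_mult_r. f_equal. apply map_ext; intros; ring. }
    assert (0 <= c0 ^ k) by (apply pow_le; lra).
    nra.
Qed.
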